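(* Let $d\ge2$, $n\ge1$, and $\gamma$ a positive conductivity on the lattice graph below. Then $T_2^{(t)}$ is injective for every $t$ with $d-1\le t\le dn-1$, and $T_2'^{(t)}$ is injective for every $t$ with $d\le t\le dn$.
   Context: Lattice: $D=\{x\in\mathbb Z^d:1\le x_i\le n\ \forall i\}$, $\partial D=\{p\in\mathbb Z^d:\min_{q\in D}\|q-p\|_{\ell^1}=1\}$; $E$ = unordered pairs $pq\subseteq D\cup\partial D$ with $\|p-q\|_{\ell^1}=1$, not both in $\partial D$; $\mathcal N(p)=\{q:pq\in E\}$; each $b\in\partial D$ has a unique neighbour $q_b\in D$. Conductivity $\gamma:E\to(0,\infty)$, symmetric. With $s(x)=\sum_ix_i$: $L_t=\{x\in D:s(x)=t\}$, $L_t^{\mathcal S}=\{x\in D:s(x)\le t\}$, $K_t^+=\{x\in\partial D:s(x)=t,\max_ix_i=n+1\}$, $K_t^-=\{x\in\partial D:s(x)=t,\min_ix_i=0\}$, $K_t^{\mathcal S\pm}=\bigcup_{\ell\le t}K_\ell^\pm$, $J_t^{\mathcal S}=K_t^{\mathcal S-}\cup K_{t+1}^{\mathcal S+}$. $T_2^{(t)}:\mathbb R^{L_{t+1}}\to\mathbb R^{\partial D\setminus J_t^{\mathcal S}}$: for $\mathbf y$, let $\mathbf w$ be the unique function on $(D\setminus L_t^{\mathcal S})\cup(\partial D\setminus J_t^{\mathcal S})$ with $\mathbf w=\mathbf y$ on $L_{t+1}$, $\mathbf w=0$ on $\partial D\setminus J_t^{\mathcal S}$, $\sum_{q\in\mathcal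 N(p)}\gamma_{pq}(\mathbf w_q-\mathbf w_p)=0$ for $p\in D\setminus L_{t+1}^{\mathcal S}$; $(T_2^{(t)}\mathbf y)_b=\gamma_{bq_b}(\mathbf w_{q_b}-\mathbf w_b)$. $T_2'^{(t)}:\mathbb R^{L_t}\to\mathbb R^{J_{t-1}^{\mathcal S}}$: for $\mathbf x$, let $\mathbf u$ be the unique function on $L_t^{\mathcal S}\cup J_{t-1}^{\mathcal S}$ with $\mathbf u=\mathbf x$ on $L_t$, $\mathbf u=0$ on $J_{t-1}^{\mathcal S}$, $\sum_{q\in\mathcal N(p)}\gamma_{pq}(\mathbf u_q-\mathbf u_p)=0$ for $p\in L_{t-1}^{\mathcal S}$; $(T_2'^{(t)}\mathbf x)_b=\gamma_{bq_b}(\mathbf u_{q_b}-\mathbf u_b)$. *)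

(* Defs.v *)
From mathcomp Require Import all_boot all_order all_algebra.
Set Implicit Arguments. Unset Strict Implicit. Unset Printing Implicit Defensive.
Import Order.TTheory GRing.Theory Num.Theory.

(* Points of Z^d are modelled inside the box {0,...,n+1}^d, which contains
   D ∪ ∂D and every edge of the graph. *)
Definition point (d n : nat) := {ffun 'I_d -> 'I_n.+2}.

Section Lattice.
Variables (d n : nat).
Local Notation P := (point d n).

Definition l1dist (p q : P) : nat :=
  \sum_(i < d) ((p i - q i) + (q i - p i))%N.

Definition ssum (x : P) : nat := \sum_(i < d) (x i : nat).

Definition inD (x : P) : bool := [forall i, (0 < x i) && (x i <= n)].

Definition inBd (p : P) : bool :=
  [exists q, inD q && (l1dist q p == 1%N)] &&
  [forall q, inD q ==> (1 <= l1dist q p)].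

Definition edge (p q : P) : bool :=
  [&& inD p || inBd p, inD q || inBd q, ~~ (inBd p && inBd q)
    & l1dist p q == 1%N].

(* q_b : the unique neighbour in D of b ∈ ∂D *)
Definition qb (b : P) : P := odflt b [pick q | edge b q].

Definition inL (t : nat) (x : P) : bool := inD x && (ssum x == t).
Definition inLS (t : nat) (x : P) : bool := inD x && (ssum x <= t).
Definition inKplus (t : nat) (x : P) : bool :=
  [&& inBd x, ssum x == t & [exists i, (x i : nat) == n.+1]].
Definition inKminus (t : nat) (x : P) : bool :=
  [&& inBd x, ssum x == t & [exists i, (x i : nat) == 0%N]].
Definition inKSplus (t : nat) (x : P) : bool :=
  [&& inBd x, ssum x <= t & [exists i, (x i : nat) == n.+1]].
Definition inKSminus (t : nat) (x : P) : bool :=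
  [&& inBd x, ssum x <= t & [exists i, (x i : nat) == 0%N]].
Definition inJS (t : nat) (x : P) : bool := inKSminus t x || inKSplus t.+1 x.

Variable R : realFieldType.
Variable gam : P -> P -> R.

Definition lapl (w : P -> R) (p : P) : R :=
  (\sum_(q | edge p q) gam p q * (w q - w p))%R.

Definition flux (w : P -> R) (b : P) : R := (gam b (qb b) * (w (qb b) - w b))%R.

(* The graph of T_2^{(t)}: z = T_2^{(t)} y, with w the harmonic extension. *)
Definition T2_graph (t : nat) (y z : P -> R) : Prop :=
  exists w : P -> R,
    [/\ forall p, inL t.+1 p -> w p = y p,
        forall p, inBd p -> ~~ inJS t p -> w p = 0%R,
        forall p, inD p -> t.+1 < ssum p -> lapl w p = 0%R
      & forall b, inBd b -> ~~ inJS t b -> z b = flux w b].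

Definition T2'_graph (t : nat) (x z : P -> R) : Prop :=
  exists u : P -> R,
    [/\ forall p, inL t p -> u p = x p,
        forall p, inJS t.-1 p -> u p = 0%R,
        forall p, inLS t.-1 p -> lapl u p = 0%R
      & forall b, inJS t.-1 b -> z b = flux u b].

End Lattice.

(* Main.v *)
Require Import Defs.
From mathcomp Require Import all_boot all_order all_algebra.
From mathcomp Require Import zify.
Set Implicit Arguments. Unset Strict Implicit. Unset Printing Implicit Defensive.
Import Order.TTheory GRing.Theory Num.Theory.

Section Aux.
Variables d n : nat.
Local Notation P := (point d n).

Lemma sum1P (f : 'I_d -> nat) : \sum_i f i = 1 ->
  exists j, f j = 1 /\ forall i, i != j -> f i = 0.
Proof.
move=> H.
case: (pickP (fun j => 0 < f j)) => [j /= Hj|H0]; last first.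
  move: H; rewrite big1 // => i _.
  by move: (H0 i) => /= /negbT; rewrite lt0n negbK => /eqP.
exists j; move: H; rewrite (bigD1 j) //=.
set S := (\sum_(i | _) _) => H.
have Hr : S = 0 by lia.
split; first lia.
move=> i Hij; move/eqP: Hr; rewrite sum_nat_eq0 => /forallP /(_ i).
by rewrite Hij => /eqP.
Qed.

Lemma l1_eq0 (p r : P) : l1dist p r = 0 -> p = r.
Proof.
move/eqP; rewrite /l1dist sum_nat_eq0 => /forallP H.
apply/ffunP => i; apply/val_inj; move: (H i) => /= /eqP; lia.
Qed.

Lemma l1_refl (p : P) : l1dist p p = 0.
Proof. by rewrite /l1dist big1 // => i _; rewrite subnn. Qed.

Lemma l1_sym (p r : P) : l1dist p r = l1dist r p.
Proof. by rewrite /l1dist; apply eq_bigr => i _; rewrite addnC. Qed.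

Lemma l1_one (p r : P) : l1dist p r = 1 -> exists j,
  ((r j : nat) = p j + 1 \/ (p j : nat) = r j + 1) /\ forall i, i != j -> r i = p i.
Proof.
move/sum1P => [j [Hj Ho]]; exists j; split; first lia.
move=> i /Ho H; apply/val_inj => /=; lia.
Qed.

Lemma l1_diff1 (p r : P) j :
  ((r j : nat) = p j + 1 \/ (p j : nat) = r j + 1) ->
  (forall i, i != j -> r i = p i) -> l1dist p r = 1.
Proof.
move=> Hj Ho; rewrite /l1dist (bigD1 j) //= big1 => [|i Hi]; first lia.
by rewrite (Ho i Hi) subnn.
Qed.

Lemma ssum_diff (p r : P) j : (forall i, i != j -> r i = p i) ->
  ssum r + p j = ssum p + r j.
Proof.
move=> Ho; rewrite /ssum (bigD1 j) //= [in RHS](bigD1 j) //=.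
rewrite (eq_bigr (fun i => (p i : nat))) => [|i Hi]; last by rewrite Ho.
set S := (\sum_(i | _) _); rewrite -/S; lia.
Qed.

Lemma inDP (p : P) : inD p -> forall i, 0 < p i /\ p i <= n.
Proof. by move/forallP => H i; move/andP: (H i). Qed.

Lemma inDI (p : P) : (forall i, 0 < p i /\ p i <= n) -> inD p.
Proof. by move=> H; apply/forallP => i; case: (H i) => -> ->. Qed.

Lemma notinD (p : P) : ~~ inD p -> exists i, (p i : nat) = 0 \/ (p i : nat) = n.+1.
Proof.
rewrite /inD negb_forall => /existsP [i Hi]; exists i.
have := ltn_ord (p i); move: Hi; rewrite negb_and -!ltnNge; lia.
Qed.

Lemma inD_notBd (p : P) : inD p -> ~~ inBd p.
Proof.
move=> H; rewrite /inBd negb_and; apply/orP; right.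
rewrite negb_forall; apply/existsP; exists p; by rewrite H l1_refl.
Qed.

Lemma bd_of (p r : P) : inD p -> l1dist p r = 1 -> ~~ inD r -> inBd r.
Proof.
move=> Hp H1 Hr; apply/andP; split.
  by apply/existsP; exists p; rewrite Hp H1.
apply/forallP => q; apply/implyP => Hq; rewrite lt0n; apply/eqP => /l1_eq0 E.
by move: Hr; rewrite -E Hq.
Qed.

Lemma qb_eq (b q : P) : edge b q -> (forall r, edge b r -> r = q) -> qb b = q.
Proof.
move=> E U; rewrite /qb; case: pickP => [r Hr|H] /=; first exact: U.
by move: (H q); rewrite E.
Qed.

Definition upd (q : P) (j : 'I_d) (v : 'I_n.+2) : P :=
  [ffun i => if i == j then v else q i].
Lemma upd_j q j v : upd q j v j = v. Proof. by rewrite ffunE eqxx. Qed.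
Lemma upd_o q j v i : i != j -> upd q j v i = q i.
Proof. by move=> H; rewrite ffunE (negbTE H). Qed.

End Aux.

Section Main.
Variables (d n : nat) (R : realFieldType) (gam : point d n -> point d n -> R).
Local Notation P := (point d n).
Hypothesis gpos : forall p q, edge p q -> (0 < gam p q)%R.

Lemma edgeD (p q : P) : inD p -> inD q -> l1dist p q = 1 -> edge p q.
Proof.
move=> Hp Hq H; apply/and4P; split; rewrite ?Hp ?Hq //; last by rewrite H.
by rewrite (negbTE (inD_notBd Hp)).
Qed.

Lemma edgeBD (b q : P) : inBd b -> inD q -> l1dist b q = 1 -> edge b q.
Proof.
move=> Hb Hq H; apply/and4P; split; rewrite ?Hb ?Hq ?orbT //; last by rewrite H.
by rewrite (negbTE (inD_notBd Hq)) andbF.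
Qed.

Lemma edge_inv (p r : P) : edge p r -> (inD r || inBd r) /\ l1dist p r = 1.
Proof. by case/and4P => _ -> _ /eqP. Qed.

Lemma edge_bd (b r : P) : inBd b -> edge b r -> inD r /\ l1dist b r = 1.
Proof.
move=> Hb /and4P [_ H1 H2 /eqP H3]; split=> //.
by move: H2 H1; rewrite Hb /= => /negbTE ->; rewrite orbF.
Qed.

Lemma flux_cancel (w1 w2 : P -> R) (b q : P) :
  edge b q -> qb b = q -> w1 b = 0%R -> w2 b = 0%R ->
  flux gam w1 b = flux gam w2 b -> w1 q = w2 q.
Proof.
move=> E Hq H1 H2; rewrite /flux Hq H1 H2 !subr0.
by apply: mulfI; rewrite gt_eqF // gpos.
Qed.

Lemma lapl_cancel (w1 w2 : P -> R) (p q : P) :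
  edge p q -> w1 p = w2 p ->
  (forall r, edge p r -> r != q -> w1 r = w2 r) ->
  lapl gam w1 p = lapl gam w2 p -> w1 q = w2 q.
Proof.
move=> E Hp Ho; rewrite /lapl (bigD1 q) //= [in X in _ = X -> _](bigD1 q) //=.
rewrite (eq_bigr (fun r => gam p r * (w2 r - w2 p))%R); last first.
  by move=> r /andP [Er Nr]; rewrite Ho // Hp.
move/addIr/mulfI; rewrite Hp gt_eqF ?gpos // => /(_ isT) /(congr1 (fun x => x + w2 p)%R).
by rewrite !subrK.
Qed.


Lemma part1 (i0 : 'I_d) t y1 y2 z1 z2 :
  T2_graph gam t y1 z1 -> T2_graph gam t y2 z2 ->
  {in [pred b | inBd b && ~~ inJS t b], z1 =1 z2} -> {in inL t.+1, y1 =1 y2}.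
Proof.
case=> w1 [A1 B1 C1 D1]; case=> w2 [A2 B2 C2 D2] Hz.
have base : forall q, inD q -> t.+1 <= ssum q -> (q i0 : nat) = n -> w1 q = w2 q.
  move=> q Hq Hs Hn.
  pose b := upd q i0 ord_max.
  have Hbo : forall i, i != i0 -> b i = q i by move=> i; exact: upd_o.
  have Hbj : (b i0 : nat) = n.+1 by rewrite /b upd_j.
  have L1 : l1dist q b = 1 by apply: (l1_diff1 (j:=i0)) => //; left; lia.
  have Hb : inBd b.
    by apply: (bd_of Hq L1); apply/negP => /inDP /(_ i0); lia.
  have Hsb := ssum_diff Hbo.
  have NJ : ~~ inJS t b.
    by apply/negP; case/orP => /and3P [_ Hs' _]; lia.
  have Eb : edge b q by apply: edgeBD => //; rewrite l1_sym.
  have Hqb : qb b = q.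
    apply: qb_eq => // r /(edge_bd Hb) [Hr /l1_one [j [Hj Hoj]]].
    case: (eqVneq j i0) => [Eji|Hne]; last first.
      by move: (inDP Hr i0); rewrite (Hoj i0) ?(eq_sym i0) //; lia.
    subst j; apply/ffunP => i; apply/val_inj => /=.
    case: (eqVneq i i0) => [->|Hi]; last by rewrite Hoj // Hbo.
    have := ltn_ord (r i0); lia.
  apply: (flux_cancel Eb Hqb (B1 _ Hb NJ) (B2 _ Hb NJ)).
  by rewrite -D1 // -D2 //; apply: Hz; rewrite inE /= Hb NJ.
suff key : forall k q, inD q -> t.+1 <= ssum q -> n - q i0 <= k -> w1 q = w2 q.
  move=> q Hq; have Hq' : inL t.+1 q by [].
  rewrite -(A1 q Hq') -(A2 q Hq').
  move/andP: Hq' => [HqD /eqP Hs].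
  by apply: (key n) => //; [rewrite Hs | exact: leq_subr].
elim=> [|k IH] q Hq Hs Hk.
  by apply: base => //; have := inDP Hq i0; lia.
case: (eqVneq (q i0 : nat) n) => [Hn|Hn]; first exact: base.
have Hlt : q i0 < n by have := inDP Hq i0; lia.
pose p := upd q i0 (inord (q i0).+1).
have Hpj : (p i0 : nat) = (q i0).+1 by rewrite /p upd_j inordK //; lia.
have Hpo : forall i, i != i0 -> p i = q i by move=> i; exact: upd_o.
have Hp : inD p.
  apply: inDI => i; case: (eqVneq i i0) => [->|Hi]; first by rewrite Hpj; lia.
  by rewrite Hpo //; exact: inDP.
have Hsp := ssum_diff Hpo.
have Lqp : l1dist q p = 1 by apply: (l1_diff1 (j:=i0)) => //; left; lia.
have Epq : edge p q by apply: edgeD => //; rewrite l1_sym.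
apply: (lapl_cancel Epq).
- by apply: IH => //; lia.
- move=> r /edge_inv [Hr /l1_one [j [Hj Hoj]]] Hrq.
  have Hsr := ssum_diff Hoj.
  have HpjD := inDP Hp j.
  case/orP: Hr => Hr.
  + apply: IH => //; first lia.
    case: (eqVneq j i0) => [Eji|Hne].
      subst j; case: Hj => Hj; first lia.
      exfalso; move/eqP: Hrq; apply; apply/ffunP => i; apply/val_inj => /=.
      case: (eqVneq i i0) => [->|Hi]; first lia.
      by rewrite Hoj // Hpo.
    by rewrite (Hoj i0) ?(eq_sym i0) //; lia.
  + have NJ : ~~ inJS t r.
      apply/negP; case/orP => /and3P [_ Hs' Hex]; first lia.
      case/existsP: Hex => i /eqP Hi.
      case: (eqVneq i j) => [Eij|Hne]; first by subst i; lia.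
      by move: Hi (inDP Hp i); rewrite Hoj //; lia.
    by rewrite (B1 _ Hr NJ) (B2 _ Hr NJ).
- by rewrite C1 ?C2 //; lia.
Qed.


Lemma part2 (i0 : 'I_d) t x1 x2 z1 z2 : 1 <= t ->
  T2'_graph gam t x1 z1 -> T2'_graph gam t x2 z2 ->
  {in inJS t.-1, z1 =1 z2} -> {in inL t, x1 =1 x2}.
Proof.
move=> Ht; case=> u1 [A1 B1 C1 D1]; case=> u2 [A2 B2 C2 D2] Hz.
have base : forall q, inD q -> ssum q <= t -> (q i0 : nat) = 1 -> u1 q = u2 q.
  move=> q Hq Hs Hn.
  pose b := upd q i0 ord0.
  have Hbo : forall i, i != i0 -> b i = q i by move=> i; exact: upd_o.
  have Hbj : (b i0 : nat) = 0 by rewrite /b upd_j.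
  have L1 : l1dist q b = 1 by apply: (l1_diff1 (j:=i0)) => //; right; lia.
  have Hb : inBd b.
    by apply: (bd_of Hq L1); apply/negP => /inDP /(_ i0); lia.
  have Hsb := ssum_diff Hbo.
  have J : inJS t.-1 b.
    apply/orP; left; apply/and3P; split => //; first lia.
    by apply/existsP; exists i0; rewrite Hbj.
  have Eb : edge b q by apply: edgeBD => //; rewrite l1_sym.
  have Hqb : qb b = q.
    apply: qb_eq => // r /(edge_bd Hb) [Hr /l1_one [j [Hj Hoj]]].
    case: (eqVneq j i0) => [Eji|Hne]; last first.
      by move: (inDP Hr i0); rewrite (Hoj i0) ?(eq_sym i0) //; lia.
    subst j; apply/ffunP => i; apply/val_inj => /=.
    case: (eqVneq i i0) => [->|Hi]; last by rewrite Hoj // Hbo.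
    lia.
  apply: (flux_cancel Eb Hqb (B1 _ J) (B2 _ J)).
  by rewrite -D1 // -D2 //; apply: Hz.
suff key : forall k q, inD q -> ssum q <= t -> q i0 <= k.+1 -> u1 q = u2 q.
  move=> q Hq; have Hq' : inL t q by [].
  rewrite -(A1 q Hq') -(A2 q Hq').
  move/andP: Hq' => [HqD /eqP Hs].
  by apply: (key n) => //; [rewrite Hs | have := inDP HqD i0; lia].
elim=> [|k IH] q Hq Hs Hk.
  by apply: base => //; have := inDP Hq i0; lia.
case: (eqVneq (q i0 : nat) 1) => [Hn|Hn]; first exact: base.
have Hlt : 1 < q i0 by have := inDP Hq i0; lia.
pose p := upd q i0 (inord (q i0).-1).
have Hpj : (p i0 : nat) = (q i0).-1.
  by rewrite /p upd_j inordK //; have := ltn_ord (q i0); lia.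
have Hpo : forall i, i != i0 -> p i = q i by move=> i; exact: upd_o.
have Hp : inD p.
  apply: inDI => i; case: (eqVneq i i0) => [->|Hi].
    by rewrite Hpj; have := inDP Hq i0; lia.
  by rewrite Hpo //; exact: inDP.
have Hsp := ssum_diff Hpo.
have Lqp : l1dist q p = 1 by apply: (l1_diff1 (j:=i0)) => //; right; lia.
have Epq : edge p q by apply: edgeD => //; rewrite l1_sym.
apply: (lapl_cancel Epq).
- by apply: IH => //; lia.
- move=> r /edge_inv [Hr /l1_one [j [Hj Hoj]]] Hrq.
  have Hsr := ssum_diff Hoj.
  have HpjD := inDP Hp j.
  case/orP: Hr => Hr.
  + apply: IH => //; first lia.
    case: (eqVneq j i0) => [Eji|Hne].
      subst j; case: Hj => Hj; last lia.
      exfalso; move/eqP: Hrq; apply; apply/ffunP => i; apply/val_inj => /=.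
      case: (eqVneq i i0) => [->|Hi]; first lia.
      by rewrite Hoj // Hpo.
    by rewrite (Hoj i0) ?(eq_sym i0) //; lia.
  + have NJ : inJS t.-1 r.
      have HnD : ~~ inD r.
        by apply/negP => H; move: (inD_notBd H); rewrite Hr.
      case: (notinD HnD) => i Hi.
      case: (eqVneq i j) => [Eij|Hne]; last first.
        by move: Hi (inDP Hp i); rewrite Hoj //; lia.
      subst i; case: Hi => Hi.
        apply/orP; left; apply/and3P; split => //; first lia.
        by apply/existsP; exists j; rewrite Hi.
      apply/orP; right; apply/and3P; split => //; first lia.
      by apply/existsP; exists j; rewrite Hi.
    by rewrite (B1 _ NJ) (B2 _ NJ).
- by rewrite C1 ?C2 //; apply/andP; split => //; lia.
Qed.

End Main.

Theorem proposition3p3 (d n : nat) (R : realFieldType)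
    (gam : point d n -> point d n -> R) :
  (2 <= d)%N -> (1 <= n)%N ->
  (forall p q, edge p q -> (0 < gam p q)%R) ->
  (forall p q, edge p q -> gam p q = gam q p) ->
  (forall t : nat, (d - 1 <= t <= d * n - 1)%N ->
     forall y1 y2 z1 z2 : point d n -> R,
       T2_graph gam t y1 z1 -> T2_graph gam t y2 z2 ->
       {in [pred b | inBd b && ~~ inJS t b], z1 =1 z2} ->
       {in inL t.+1, y1 =1 y2})
  /\
  (forall t : nat, (d <= t <= d * n)%N ->
     forall x1 x2 z1 z2 : point d n -> R,
       T2'_graph gam t x1 z1 -> T2'_graph gam t x2 z2 ->
       {in inJS t.-1, z1 =1 z2} ->
       {in inL t, x1 =1 x2}).
Proof.
move=> Hd Hn Hpos Hsym.
have H0 : (0 < d)%N by apply: leq_trans Hd.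
pose i0 : 'I_d := Ordinal H0.
split=> t Ht.
- exact: (part1 Hpos i0).
- move=> x1 x2 z1 z2; apply: (part2 Hpos i0).
  by move/andP: Ht => [Ht _]; apply: leq_trans Ht; apply: leq_trans Hd.
Qed.
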